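(* Let $\ell \geq 2$ and let $\mathcal G \subset \binom{[2\ell]}{\ell}$ be a non-empty non-trivial family. For $r \ge 1$ let $t_r$ be the number of sets $T \in \binom{[2\ell]}{r}$ such that $T \cap G \neq \emptyset$ for all $G \in \mathcal G$. Then for every $2 \leq r < \ell$, $$t_r \leq \binom{2\ell}{r} - 2\binom{\ell}{r}.$$
   Context: A non-empty family is non-trivial if the intersection of all its members is empty. *)

(* Defs.v *)
From mathcomp Require Import all_boot.
Set Implicit Arguments. Unset Strict Implicit. Unset Printing Implicit Defensive.

Definition nontrivial_family (n : nat) (F : {set {set 'I_n}}) : Prop :=
  \bigcap_(G in F) G = set0.

Definition transversal_count (n : nat) (F : {set {set 'I_n}}) (r : nat) : nat :=
  #|[set T : {set 'I_n} | (#|T| == r) && [forall G in F, T :&: G != set0]]|.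

(* Main.v *)
Require Import Defs.
From mathcomp Require Import all_boot.
From mathcomp Require Import zify.
From Stdlib Require Import Lia.

Lemma sum_bool_card (I : finType) (A : {set I}) (b : pred I) :
  \sum_(i in A) (b i : nat) = #|A :&: [set i | b i]|.
Proof.
rewrite -sum1_card big_mkcond [RHS]big_mkcond; apply: eq_bigr => i _.
by rewrite !inE; case: (i \in A); case: (b i).
Qed.

Theorem lemma4p4 (l : nat) (F : {set {set 'I_(2 * l)}}) :
  2 <= l ->
  (forall G, G \in F -> #|G| = l) ->
  F != set0 ->
  nontrivial_family F ->
  forall r, 2 <= r -> r < l ->
  transversal_count F r <= 'C(2 * l, r) - 2 * 'C(l, r).
Proof.
move=> l2 Fl F0 ntF r r2 rl.
have [G1 G1F] := set0Pn _ F0.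
set N := [set T : {set 'I_(2 * l)} | (#|T| == r) && ~~ [forall G in F, T :&: G != set0]].
have cardC : forall G, G \in F -> #|~: G| = l.
  move=> G GF; have := cardsC G; rewrite card_ord Fl //; lia.
have E1 : transversal_count F r + #|N| = 'C(2 * l, r).
  rewrite -[2 * l in RHS]card_ord -card_draws.
  rewrite -(cardsID [set T : {set 'I_(2 * l)} | [forall G in F, T :&: G != set0]] [set A : {set 'I_(2 * l)} | #|A| == r]).
  rewrite /transversal_count; congr (_ + _); apply: eq_card => T; rewrite !inE //.
  by rewrite andbC.
have key : 2 * 'C(l, r) <= #|N|; last by lia.
set S := [set T : {set 'I_(2 * l)} | T \subset ~: G1].
rewrite -(cardsID S N).
have A1 : 'C(l, r) <= #|N :&: S|.
  rewrite -[l in 'C(l, r)](cardC G1 G1F) -cards_draws; apply: subset_leq_card.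
  apply/subsetP => T; rewrite !inE => /andP [TG1 Tr]; rewrite Tr TG1 /= andbT.
  apply/forall_inPn; exists G1 => //; rewrite negbK.
  apply/eqP/disjoint_setI0; by rewrite disjoints_subset.
suff B1 : 'C(l, r) <= #|N :\: S| by lia.
have s0 : 0 < r by lia.
rewrite -(leq_pmul2l s0).
have binE : 'C(l, r) = 'C(l.-1, r) + 'C(l.-1, r.-1).
  by rewrite -[l in 'C(l, _)](prednK (ltnW l2)) -[r in 'C(_.+1, r)](prednK s0) binS prednK.
have -> : r * 'C(l, r) = l * 'C(l.-1, r.-1).
  by rewrite mul_bin_diag prednK.
have -> : l * 'C(l.-1, r.-1) = \sum_(x in G1) 'C(l.-1, r.-1).
  by rewrite sum_nat_const Fl // mulnC.
apply: (@leq_trans (\sum_(x in G1) \sum_(T in N :\: S) (x \in T : nat))).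
  apply: leq_sum => x xG1.
  have [Gx GxF xGx] : exists2 Gx, Gx \in F & x \notin Gx.
    apply/forall_inPn/negP => /forall_inP H.
    have : x \in \bigcap_(G in F) G by apply/bigcapP.
    by rewrite ntF inE.
  set H := ~: Gx.
  have xH : x \in H by rewrite inE.
  have cH : #|H :\ x| = l.-1 by have := cardsD1 x H; rewrite xH cardC //; lia.
  have := cards_draws H r; rewrite cardC // binE.
  rewrite -cH -cards_draws -(cardsID [set T : {set 'I_(2 * l)} | x \in T]).
  have -> : [set A : {set 'I_(2 * l)} | A \subset H & #|A| == r]
             :\: [set T : {set 'I_(2 * l)} | x \in T]
           = [set A : {set 'I_(2 * l)} | A \subset H :\ x & #|A| == r].
    by apply/setP => T; rewrite !inE subsetD1; case: (x \in T); case: (T \subset H).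
  rewrite cH addnC => /addnI <-.
  rewrite sum_bool_card; apply: subset_leq_card; apply/subsetP => T.
  rewrite !inE => /andP [/andP [TH Tr] xT]; rewrite xT Tr /= andbT; apply/andP; split.
    apply/negP => /subsetP /(_ x xT); by rewrite inE xG1.
  apply/forall_inPn; exists Gx => //; rewrite negbK.
  apply/eqP/disjoint_setI0; by rewrite disjoints_subset.
rewrite exchange_big /= [r * _]mulnC -sum_nat_const; apply: leq_sum => T.
rewrite !inE => /andP [_ /andP [/eqP Tr _]].
rewrite sum_bool_card -Tr; apply: subset_leq_card; apply/subsetP => x; rewrite !inE.
by case/andP.
Qed.
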